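(* Let $\varphi$ be a skew-morphism of a finite group $A$ of order $m$ with power function $\pi:A\to\mathbb{Z}_m$ and derived power function $\sigma_\pi$. Then for all nonnegative integers $k,k_1,k_2,q,r$: (a) $\sigma_\pi(xy,k)\equiv\sigma_\pi(y,\sigma_\pi(x,k))\pmod m$ for all $x,y\in A$; (b) $\sigma_\pi(x,k)\equiv0\pmod m$ for all $x\in A$ if and only if $m\mid k$; (c) $\sigma_\pi(x,mq+r)\equiv\sigma_\pi(x,r)\pmod m$ for all $x\in A$; (d) $\sigma_\pi(x,k_1)\equiv\sigma_\pi(x,k_2)\pmod m$ for all $x\in A$ if and only if $k_1\equiv k_2\pmod m$.
   Context: A skew-morphism of a finite group $A$ is a permutation $\varphi$ of $A$ with $\varphi(1_A)=1_A$ for which there is a function $\pi:A\to\mathbb{Z}_m$, $m$ the order of $\varphi$ as a permutation, such that $\varphi(xy)=\varphi(x)\varphi^{\pi(x)}(y)$ for all $x,y\in A$ ($\pi$ is the power function). The derived power function is $\sigma_\pi(x,0)=0$ and $\sigma_\pi(x,k)=\sum_{i=1}^{k}\pi(\varphi^{i-1}(x))$ (computed in $\mathbb{Z}_m$) for $k>0$; in (a) the inner value $\sigma_\pi(x,k)\in\mathbb{Z}_m$ is used as second argument via any nonnegative integer representative. *)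

(* Defs.v *)
From mathcomp Require Import all_boot all_fingroup.
Set Implicit Arguments. Unset Strict Implicit. Unset Printing Implicit Defensive.

Local Open Scope group_scope.

(* A skew-morphism of the finite group gT (the whole group type): a permutation
   phi of gT fixing 1, with a power function pi : gT -> Z_m, m = #[phi] the
   order of phi as a permutation (elements of Z_m represented in 'I_m). *)
Definition is_skew_morphism (gT : finGroupType) (phi : {perm gT})
  (pi : gT -> 'I_#[phi]) : Prop :=
  phi 1 = 1 /\ forall x y : gT, phi (x * y) = phi x * (phi ^+ pi x) y.

Definition sigma_pi (gT : finGroupType) (phi : {perm gT})
  (pi : gT -> 'I_#[phi]) (x : gT) (k : nat) : nat :=
  ((\sum_(i < k) nat_of_ord (pi ((phi ^+ i) x))) %% #[phi])%N.

(* Main.v *)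
Require Import Defs.
From mathcomp Require Import all_boot all_fingroup all_solvable.

Local Open Scope group_scope.
Set Implicit Arguments.

Section Aux.
Variables (gT : finGroupType) (phi : {perm gT}) (pi : gT -> 'I_#[phi]).
Hypothesis Hs : is_skew_morphism pi.

Definition SS (x : gT) (k : nat) : nat :=
  (\sum_(i < k) nat_of_ord (pi ((phi ^+ i) x)))%N.

Lemma sigmaE x k : sigma_pi pi x k = (SS x k %% #[phi])%N.
Proof. by []. Qed.

Lemma keyL k x y : (phi ^+ k) (x * y) = (phi ^+ k) x * (phi ^+ SS x k) y.
Proof.
elim: k => [|k IH].
  by rewrite /SS big_ord0 !expg0 !perm1.
rewrite /SS big_ord_recr /= -/(SS x k) !expgSr !permM IH (proj2 Hs).
by rewrite expgD permM.
Qed.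

Lemma SSpow k x : phi ^+ SS x k = (phi ^+ SS x k).
Proof. by []. Qed.

Lemma pow_SS_eq k1 k2 : phi ^+ k1 = phi ^+ k2 ->
  forall x, phi ^+ SS x k1 = phi ^+ SS x k2.
Proof.
move=> E x; apply/permP => y.
have h1 := keyL k1 x y; have h2 := keyL k2 x y.
rewrite E in h1; rewrite h2 in h1.
by rewrite (mulgI _ _ _ h1).
Qed.

Lemma SS_pow_eq k1 k2 : (forall x, phi ^+ SS x k1 = phi ^+ SS x k2) ->
  phi ^+ k1 = phi ^+ k2.
Proof.
move=> E; apply/permP => x.
have h1 := keyL k1 x x^-1; have h2 := keyL k2 x x^-1.
rewrite mulgV in h1 h2.
have p1 : (phi ^+ k1) 1 = 1 by rewrite -(expg_mod_order phi k1); elim: (_ %% _)%N => [|n IH]; rewrite ?expg0 ?perm1 // expgSr permM IH (proj1 Hs).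
have p2 : (phi ^+ k2) 1 = 1 by rewrite -(expg_mod_order phi k2); elim: (_ %% _)%N => [|n IH]; rewrite ?expg0 ?perm1 // expgSr permM IH (proj1 Hs).
rewrite p1 E in h1; rewrite p2 in h2.
by apply: (mulIg ((phi ^+ SS x k2) x^-1)); rewrite -h1 -h2.
Qed.

Lemma modE a b : (a = b %[mod #[phi]]) <-> phi ^+ a = phi ^+ b.
Proof.
split=> [/eqP|/eqP]; first by rewrite -eq_expg_mod_order => /eqP.
by rewrite eq_expg_mod_order => /eqP.
Qed.

End Aux.

Theorem proposition2p4 (gT : finGroupType) (phi : {perm gT})
  (pi : gT -> 'I_#[phi]) :
  is_skew_morphism pi ->
  (* (a): for any nonnegative representative j of sigma(x,k) *)
  (forall (k j : nat) (x y : gT), j = sigma_pi pi x k %[mod #[phi]] ->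
     sigma_pi pi (x * y) k = sigma_pi pi y j %[mod #[phi]]) /\
  (* (b) *)
  (forall k : nat,
     (forall x : gT, sigma_pi pi x k = 0 %[mod #[phi]]) <-> (#[phi] %| k)%N) /\
  (* (c) *)
  (forall (q r : nat) (x : gT),
     sigma_pi pi x (#[phi] * q + r)%N = sigma_pi pi x r %[mod #[phi]]) /\
  (* (d) *)
  (forall k1 k2 : nat,
     (forall x : gT, sigma_pi pi x k1 = sigma_pi pi x k2 %[mod #[phi]]) <->
     k1 = k2 %[mod #[phi]]).
Proof.
move=> Hs.
have D : forall k1 k2 : nat,
     (forall x : gT, sigma_pi pi x k1 = sigma_pi pi x k2 %[mod #[phi]]) <->
     k1 = k2 %[mod #[phi]].
  move=> k1 k2; split.
    move=> H; apply/modE; apply: (@SS_pow_eq _ _ _ Hs) => x.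
    by apply/modE; have := H x; rewrite !sigmaE !modn_mod.
  move/modE => E x; rewrite !sigmaE !modn_mod; apply/modE.
  exact: (@pow_SS_eq _ _ _ Hs).
split; last split; last split => //.
- move=> k j x y; rewrite !sigmaE !modn_mod => /modE Ej; apply/modE.
  rewrite (@pow_SS_eq _ _ _ Hs _ _ Ej).
  apply/permP => z.
  have h1 := keyL Hs k (x * y) z.
  have h2 := keyL Hs k x (y * z).
  rewrite mulgA h1 (keyL Hs) (keyL Hs) -mulgA in h2.
  exact: (mulgI _ _ _ (mulgI _ _ _ h2)).
- move=> k.
  have E0 : forall x, sigma_pi pi x 0 = 0%N.
    by move=> x; rewrite /sigma_pi big_ord0 mod0n.
  split.
    move=> H; have /D : forall x, sigma_pi pi x k = sigma_pi pi x 0 %[mod #[phi]].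
      by move=> x; rewrite E0 H.
    by move/eqP; rewrite mod0n.
  move=> H x; have := proj2 (D k 0) _ x; rewrite E0; apply.
  by rewrite mod0n; apply/eqP.
- move=> q r; apply: (proj2 (D _ _)).
  by rewrite mulnC modnMDl.
Qed.
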